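(* Let $A,L$ be real symmetric $n\times n$ matrices such that the real Lie algebra generated by $iA$ and $iL$ equals $u(n)$. Let $\mathcal{S}$ be the real linear span of all matrices of the form $ad_{iA}^{k_1}\, ad_{iL}^{k_2}\cdots ad_{iA}^{k_{s-1}}\, ad_{iL}^{k_s}\,[iA,iL]$, where $s$ and $k_1,\dots,k_s$ range over nonnegative integers. Then $\mathcal{S}=su(n)$.
   Context: $ad_X(Y):=[X,Y]=XY-YX$. The real Lie algebra generated by a set of matrices is the smallest real vector space containing them and closed under commutators. $u(n)$ is the real Lie algebra of $n\times n$ complex skew-Hermitian matrices, and $su(n)$ is the real Lie algebra of $n\times n$ complex skew-Hermitian matrices with zero trace. *)

(* Defs.v *)
From HB Require Import structures.
From mathcomp Require Import all_boot all_order all_algebra.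
From mathcomp Require Import complex.
From mathcomp Require Import reals.
Set Implicit Arguments. Unset Strict Implicit. Unset Printing Implicit Defensive.
Import Order.TTheory GRing.Theory Num.Theory.
Local Open Scope ring_scope.
Local Open Scope complex_scope.

Section LieDefs.
Variables (R : realType) (n : nat).
Local Notation M := 'M[R[i]]_n.

Definition lie_br (X Y : M) : M := X *m Y - Y *m X.
Definition ad (X : M) : M -> M := lie_br X.

Definition cplx_mx (A : 'M[R]_n) : M := map_mx (fun x => x%:C) A.

Definition adjoint (X : M) : M := (map_mx (@conjc R) X)^T.

Definition in_u (X : M) : Prop := adjoint X = - X.
Definition in_su (X : M) : Prop := in_u X /\ \tr X = 0.

Definition real_subspace (V : M -> Prop) : Prop :=
  [/\ V 0,
      (forall X Y, V X -> V Y -> V (X + Y)) &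
      (forall (r : R) X, V X -> V (r%:C *: X))].

Definition real_lie_subalgebra (V : M -> Prop) : Prop :=
  real_subspace V /\ (forall X Y, V X -> V Y -> V (lie_br X Y)).

Definition real_span (P : M -> Prop) (X : M) : Prop :=
  forall V, real_subspace V -> (forall Y, P Y -> V Y) -> V X.

Definition real_lie_generated (P : M -> Prop) (X : M) : Prop :=
  forall V, real_lie_subalgebra V -> (forall Y, P Y -> V Y) -> V X.

(* adword X Y [:: k1; k2; ...; ks] B
     = ad_X^k1 (ad_Y^k2 (ad_X^k3 ( ... B))) ,
   the operators alternating X, Y, X, Y, ... starting with X. *)
Fixpoint adword (X Y : M) (ks : seq nat) (B : M) : M :=
  match ks with
  | [::] => B
  | k :: ks' => iter k (ad X) (adword Y X ks' B)
  end.

End LieDefs.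

(* Main.v *)
Require Import Defs.
From HB Require Import structures.
From mathcomp Require Import all_boot all_order all_algebra.
From mathcomp Require Import complex.
From mathcomp Require Import reals ring.
Set Implicit Arguments. Unset Strict Implicit. Unset Printing Implicit Defensive.
Import Order.TTheory GRing.Theory Num.Theory.
Local Open Scope ring_scope.
Local Open Scope complex_scope.

Lemma lie_brDl (R : realType) n (X Y Z : 'M[R[i]]_n) :
  lie_br (X + Y) Z = lie_br X Z + lie_br Y Z.
Proof. rewrite /lie_br mulmxDl mulmxDr. by rewrite opprD addrACA. Qed.
Lemma lie_brDr (R : realType) n (X Y Z : 'M[R[i]]_n) :
  lie_br Z (X + Y) = lie_br Z X + lie_br Z Y.
Proof. rewrite /lie_br mulmxDl mulmxDr. by rewrite opprD addrACA. Qed.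
Lemma lie_brZl (R : realType) n c (X Y : 'M[R[i]]_n) :
  lie_br (c *: X) Y = c *: lie_br X Y.
Proof. by rewrite /lie_br scalerBr -scalemxAl -scalemxAr. Qed.
Lemma lie_brZr (R : realType) n c (X Y : 'M[R[i]]_n) :
  lie_br X (c *: Y) = c *: lie_br X Y.
Proof. by rewrite /lie_br scalerBr -scalemxAl -scalemxAr. Qed.
Lemma lie_brC (R : realType) n (X Y : 'M[R[i]]_n) :
  lie_br Y X = - lie_br X Y.
Proof. by rewrite /lie_br opprB. Qed.

Lemma jac_zmod (V : zmodType) (p q r s t u : V) :
  p - r - (t - u) = p - q - (s - u) - (r - s - (q - t)).
Proof.
rewrite !opprB !addrA.
rewrite [p - q + u - s + q](addrAC _ (- s)) [p - q + u + q](addrAC _ u) subrK.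
rewrite [p + u - s - t + s](addrAC _ (- t)) subrK.
by rewrite [p - r + u](addrAC _ (- r)) [p + u - r - t](addrAC _ (-r)).
Qed.

Lemma lie_jacobi (R : realType) n (X Y Z : 'M[R[i]]_n) :
  lie_br (lie_br X Y) Z = lie_br X (lie_br Y Z) - lie_br Y (lie_br X Z).
Proof. rewrite /lie_br !mulmxBl !mulmxBr !mulmxA; exact: jac_zmod. Qed.

Lemma subN (R : realType) n (V : 'M[R[i]]_n -> Prop) X :
  real_subspace V -> V X -> V (- X).
Proof.
case=> _ _ hZ hX; have := hZ (-1) X hX.
by rewrite raddfN /= scaleN1r.
Qed.

Lemma subsum (R : realType) n (V : 'M[R[i]]_n -> Prop) (I : Type) (r : seq I)
  (P : pred I) (F : I -> 'M[R[i]]_n) :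
  real_subspace V -> (forall i, P i -> V (F i)) -> V (\sum_(i <- r | P i) F i).
Proof. by case=> h0 hD _ hF; apply: big_ind. Qed.


Lemma conjK' (R : realType) (z : R[i]) : z^*^* = z.
Proof. by case: z => a b; rewrite /= opprK. Qed.

Lemma adjointD (R : realType) n (X Y : 'M[R[i]]_n) :
  adjoint (X + Y) = adjoint X + adjoint Y.
Proof. by apply/matrixP => p q; rewrite !mxE rmorphD. Qed.
Lemma adjointN (R : realType) n (X : 'M[R[i]]_n) :
  adjoint (- X) = - adjoint X.
Proof. by apply/matrixP => p q; rewrite !mxE rmorphN. Qed.
Lemma adjointZ (R : realType) n c (X : 'M[R[i]]_n) :
  adjoint (c *: X) = c^* *: adjoint X.
Proof. by apply/matrixP => p q; rewrite !mxE rmorphM. Qed.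
Lemma adjoint_delta (R : realType) n (j k : 'I_n) :
  adjoint (delta_mx j k : 'M[R[i]]_n) = delta_mx k j.
Proof. by apply/matrixP => p q; rewrite !mxE conjc_nat andbC. Qed.

Definition Pm (R : realType) n (j k : 'I_n) (z : R[i]) : 'M[R[i]]_n :=
  z *: delta_mx j k - z^* *: delta_mx k j.
Definition Dm (R : realType) n (j : 'I_n) : 'M[R[i]]_n := 'i *: delta_mx j j.

Lemma in_u_Pm (R : realType) n (j k : 'I_n) (z : R[i]) : in_u (Pm j k z).
Proof.
rewrite /in_u /Pm adjointD adjointN !adjointZ !adjoint_delta conjCK.
by rewrite opprB addrC.
Qed.

Lemma in_u_Dm (R : realType) n (j : 'I_n) : in_u (Dm R j).
Proof. by rewrite /in_u /Dm adjointZ adjoint_delta conjCi scaleNr. Qed.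

Lemma conj_iM (R : realType) (z : R[i]) : Num.conj (Num.imaginary * z) = - (Num.imaginary * Num.conj z).
Proof. case: z => a b. apply/eqP; rewrite eq_complex /=; apply/andP; split; apply/eqP; ring. Qed.
Lemma iiz (R : realType) (z : R[i]) : Num.imaginary * (- Num.imaginary * z) = z.
Proof. case: z => a b. apply/eqP; rewrite eq_complex /=; apply/andP; split; apply/eqP; ring. Qed.

Lemma lie_Dm_Pm (R : realType) n (j k : 'I_n) (z : R[i]) : j != k ->
  lie_br (Dm R j) (Pm j k z) = Pm j k ('i * z).
Proof.
move=> hjk; rewrite /lie_br /Dm /Pm.
rewrite mulmxBr mulmxBl -!scalemxAl -!scalemxAr !mul_delta_mx_cond.
rewrite !eqxx (negbTE hjk) eq_sym (negbTE hjk) !mulr0n !mulr1n !scaler0 !subr0 sub0r.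
by rewrite conj_iM scaleNr !opprK !scalerA [_ * 'i]mulrC.
Qed.

Lemma zm2 (V : zmodType) (a b c d : V) :
  - a - b - (- c - d) = d - a - (b - c).
Proof.
rewrite !opprB !opprK [d - a]addrC -!addrA; congr (_ + _).
by rewrite addrCA [- b + c]addrC.
Qed.

Lemma lie_Pm_Pm (R : realType) n (j k : 'I_n) (z : R[i]) : j != k ->
  lie_br (Pm j k 1) (Pm j k z) = (z - Num.conj z) *: (delta_mx j j - delta_mx k k).
Proof.
move=> hjk; rewrite /lie_br /Pm conjC1 !scale1r.
rewrite !mulmxBr !mulmxBl -!scalemxAl -!scalemxAr !mul_delta_mx_cond.
rewrite !eqxx (negbTE hjk) eq_sym (negbTE hjk) !mulr0n !mulr1n !scaler0.
rewrite !sub0r !subr0 scalerBl !scalerBr; exact: zm2.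
Qed.

Lemma Vdiag (R : realType) n (V : 'M[R[i]]_n -> Prop) :
  real_subspace V ->
  (forall U W, in_u U -> in_u W -> V (lie_br U W)) ->
  forall (j k : 'I_n) (w : R[i]),
  V ((w - Num.conj w) *: (delta_mx j j - delta_mx k k)).
Proof.
move=> hV hC j k w; case: (eqVneq j k) => [->|hjk].
  by rewrite subrr scaler0; case: hV.
rewrite -lie_Pm_Pm //; apply: hC; exact: in_u_Pm.
Qed.

Lemma Voff (R : realType) n (V : 'M[R[i]]_n -> Prop) :
  (forall U W, in_u U -> in_u W -> V (lie_br U W)) ->
  forall (j k : 'I_n) (z : R[i]), j != k -> V (Pm j k z).
Proof.
move=> hC j k z hjk; rewrite -[z]iiz -lie_Dm_Pm //.
apply: hC; [exact: in_u_Dm | exact: in_u_Pm].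
Qed.

Lemma su_sub (R : realType) n (V : 'M[R[i]]_n -> Prop) :
  real_subspace V ->
  (forall U W, in_u U -> in_u W -> V (lie_br U W)) ->
  forall X, in_su X -> V X.
Proof.
case: n V => [|n] V hV hC X [hu htr].
  by rewrite [X]flatmx0; case: hV.
have h2 : (2%:R : R[i]) *: X = \sum_j \sum_k Pm j k (X j k).
  rewrite /Pm; under eq_bigr do rewrite sumrB.
  rewrite sumrB -matrix_sum_delta.
  have -> : \sum_(j < n.+1) \sum_(k < n.+1) Num.conj (X j k) *: delta_mx k j = adjoint X.
    rewrite [RHS]matrix_sum_delta exchange_big /=.
    by apply: eq_bigr => j _; apply: eq_bigr => k _; rewrite !mxE.
  by rewrite hu opprK scaler_nat mulr2n.
suff hV2 : V ((2%:R : R[i]) *: X).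
  have := (let: And3 _ _ hZ := hV in hZ) (2^-1) _ hV2.
  rewrite scalerA -(rmorph_nat (real_complex R)) -rmorphM mulVf ?pnatr_eq0 //.
  by rewrite rmorph1 scale1r.
rewrite h2.
under eq_bigr => j _ do rewrite (bigD1 j) //=.
rewrite big_split /=.
case: (hV) => _ hD _; apply: hD; last first.
  apply: subsum => // j _; apply: subsum => // k hk.
  by apply: Voff => //; rewrite eq_sym.
have hs : \sum_(j < n.+1) (X j j - Num.conj (X j j)) = 0.
  rewrite sumrB.
  have -> : \sum_(j < n.+1) Num.conj (X j j) = Num.conj (\tr X).
    by rewrite /mxtrace rmorph_sum.
  rewrite htr conjC0 subr0; exact: htr.
have E : forall j : 'I_n.+1, Pm j j (X j j) =
   (X j j - Num.conj (X j j)) *: (delta_mx j j - delta_mx 0 0)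
   + (X j j - Num.conj (X j j)) *: delta_mx 0 0.
  by move=> j; rewrite /Pm scalerBr subrK scalerBl.
under eq_bigr => j _ do rewrite E.
rewrite big_split /= -scaler_suml hs scale0r addr0.
apply: subsum => // j _; exact: Vdiag.
Qed.

Lemma span_subspace (R : realType) n (P : 'M[R[i]]_n -> Prop) :
  real_subspace (real_span P).
Proof.
split.
- by move=> V [h0 _ _].
- by move=> X Y hX hY V hV hP; case: (hV) => _ hD _; apply: hD; [apply: hX | apply: hY].
- by move=> r X hX V hV hP; case: (hV) => _ _ hZ; apply: hZ; apply: hX.
Qed.

Lemma span_in (R : realType) n (P : 'M[R[i]]_n -> Prop) X :
  P X -> real_span P X.
Proof. by move=> hX V _ hP; apply: hP. Qed.

Lemma lieg_subalg (R : realType) n (P : 'M[R[i]]_n -> Prop) :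
  real_lie_subalgebra (real_lie_generated P).
Proof.
split; first split.
- by move=> V [[h0 _ _] _].
- move=> X Y hX hY V hV hP; case: (hV) => [[_ hD _] _]; apply: hD; [apply: hX | apply: hY] => //.
- move=> r X hX V hV hP; case: (hV) => [[_ _ hZ] _]; apply: hZ; apply: hX => //.
- move=> X Y hX hY V hV hP; case: (hV) => _ hB; apply: hB; [apply: hX | apply: hY] => //.
Qed.

Lemma lieg_in (R : realType) n (P : 'M[R[i]]_n -> Prop) X :
  P X -> real_lie_generated P X.
Proof. by move=> hX V _ hP; apply: hP. Qed.

Lemma adword_ind (R : realType) n (Q : 'M[R[i]]_n -> Prop) (X Y : 'M[R[i]]_n) ks B :
  (forall Z, Q Z -> Q (ad X Z)) -> (forall Z, Q Z -> Q (ad Y Z)) -> Q B ->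
  Q (adword X Y ks B).
Proof.
elim: ks X Y => [|k ks IH] X Y hX hY hB //=.
elim: k => [|k IHk] /=; first exact: IH.
exact: hX.
Qed.

Lemma tr_lie (R : realType) n (X Y : 'M[R[i]]_n) : \tr (lie_br X Y) = 0.
Proof. by rewrite /lie_br linearB /= mxtrace_mulC subrr. Qed.

Lemma lie_br0r (R : realType) n (X : 'M[R[i]]_n) : lie_br X 0 = 0.
Proof. by rewrite /lie_br mulmx0 mul0mx subrr. Qed.
Lemma lie_br0l (R : realType) n (X : 'M[R[i]]_n) : lie_br 0 X = 0.
Proof. by rewrite /lie_br mulmx0 mul0mx subrr. Qed.
Lemma lie_brxx (R : realType) n (X : 'M[R[i]]_n) : lie_br X X = 0.
Proof. by rewrite /lie_br subrr. Qed.

Theorem lemma2p3 (R : realType) (n : nat) (A L : 'M[R]_n) :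
  A^T = A -> L^T = L ->
  (forall X : 'M[R[i]]_n,
     real_lie_generated
       (fun Y => Y = 'i *: cplx_mx A \/ Y = 'i *: cplx_mx L) X
     <-> in_u X) ->
  forall X : 'M[R[i]]_n,
    real_span
      (fun Y => exists ks : seq nat,
         Y = adword ('i *: cplx_mx A) ('i *: cplx_mx L) ks
               (lie_br ('i *: cplx_mx A) ('i *: cplx_mx L))) X
    <-> in_su X.
Proof.
move=> _ _.
move: ('i *: cplx_mx A) ('i *: cplx_mx L) => a l hgen X.
set Lie := real_lie_generated _ in hgen.
set S := real_span _.
have hS : real_subspace S by exact: span_subspace.
have hLie : real_lie_subalgebra Lie by exact: lieg_subalg.
have La : Lie a by apply: lieg_in; left.
have Ll : Lie l by apply: lieg_in; right.
case: (hS) => hS0 hSD hSZ.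
have hSN : forall Y, S Y -> S (- Y) by move=> Y; exact: subN.
split.
  move=> hX.
  pose Q Z := Lie Z /\ \tr Z = 0.
  have hQ : real_subspace Q.
    case: hLie => [[h0 hD hZ] _]; split.
    - by split; [exact: h0 | exact: mxtrace0].
    - by move=> U W [hU tU] [hW tW]; split; [exact: hD | rewrite mxtraceD tU tW addr0].
    - by move=> r U [hU tU]; split; [exact: hZ | rewrite mxtraceZ tU mulr0].
  have hadQ : forall x, Lie x -> forall Z, Q Z -> Q (ad x Z).
    move=> x hx Z [hZ _]; split; last exact: tr_lie.
    by case: hLie => _ hB; apply: (hB).
  have [hXL hXt] : Q X.
    apply: (hX Q) => // Y [ks ->].
    apply: adword_ind; [exact: hadQ | exact: hadQ |].
    split; last exact: tr_lie.
    by case: hLie => _ hB; apply: (hB).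
  by split => //; apply/hgen.
move=> hX; apply: su_sub hS _ X hX => U W hU hW.
have adS : forall Y, S Y -> S (ad a Y) /\ S (ad l Y).
  move=> Y hY; apply: (hY (fun Y => S (ad a Y) /\ S (ad l Y))).
  - split.
    + by split; rewrite /ad lie_br0r.
    + by move=> Y1 Y2 [h1 h1'] [h2 h2']; rewrite /ad !lie_brDr; split; apply: (hSD).
    + by move=> r Y1 [h1 h1']; rewrite /ad !lie_brZr; split; apply: (hSZ).
  - move=> Y1 [ks ->]; split.
    + by apply: span_in; exists [:: 1%N, 0%N & ks].
    + by apply: span_in; exists [:: 0%N, 1%N & ks].
pose T X := forall Y, S Y -> S (lie_br X Y).
have hT : real_lie_subalgebra T.
  split; first split.
  - by move=> Y _; rewrite lie_br0l.
  - by move=> X1 X2 h1 h2 Y hY; rewrite lie_brDl; apply: (hSD); [apply: h1 | apply: h2].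
  - by move=> r X1 h1 Y hY; rewrite lie_brZl; apply: (hSZ); apply: h1.
  - move=> X1 X2 h1 h2 Y hY; rewrite lie_jacobi; apply: (hSD).
      by apply: h1; apply: h2.
    by apply: (hSN); apply: h2; apply: h1.
have LT : forall x, Lie x -> T x.
  move=> x hx; apply: (hx T) => // Y [->|->] Z hZ; have [h1 h2] := adS Z hZ; by [].
have Sal : S (lie_br a l) by apply: span_in; exists [::].
have Sx0 : forall (al be al' be' : R),
    S (lie_br (al%:C *: a + be%:C *: l) (al'%:C *: a + be'%:C *: l)).
  move=> al be al' be'.
  rewrite !lie_brDl !lie_brDr !lie_brZl !lie_brZr !lie_brxx !scaler0 !add0r !addr0.
  apply: (hSD); apply: (hSZ); apply: (hSZ) => //.
  by rewrite lie_brC; apply: (hSN).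
have Lx0 : forall (al be : R), Lie (al%:C *: a + be%:C *: l).
  move=> al be; case: hLie => [[_ hD hZ] _].
  by apply: (hD); apply: (hZ).
pose Vs X := Lie X /\ exists (al be : R) s, S s /\ X = al%:C *: a + be%:C *: l + s.
have key : forall U W, Vs U -> Vs W -> S (lie_br U W).
  move=> U1 W1 [hU1 [al [be [s [hs ->]]]]] [hW1 [al' [be' [s' [hs' eW]]]]].
  rewrite lie_brDl; apply: (hSD); last first.
    rewrite lie_brC; apply: (hSN); exact: (LT _ hW1).
  rewrite eW lie_brDr; apply: (hSD); first exact: Sx0.
  exact: (LT _ (Lx0 al be)).
have hVs : real_lie_subalgebra Vs.
  case: (hLie) => [[hL0 hLD hLZ] hLB].
  split; first split.
  - split => //; exists 0, 0, 0; split => //.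
    by rewrite rmorph0 !scale0r !addr0.
  - move=> U1 W1 [hU1 [al [be [s [hs eU]]]]] [hW1 [al' [be' [s' [hs' eW]]]]].
    split; first exact: hLD.
    exists (al + al'), (be + be'), (s + s'); split; first exact: hSD.
    by rewrite eU eW addrACA [al%:C *: a + _ + _]addrACA !rmorphD !scalerDl.
  - move=> r U1 [hU1 [al [be [s [hs eU]]]]].
    split; first exact: hLZ.
    exists (r * al), (r * be), (r%:C *: s); split; first exact: hSZ.
    by rewrite eU !scalerDr !scalerA !rmorphM.
  - move=> U1 W1 hU1 hW1; split; first by apply: (hLB); [case: hU1 | case: hW1].
    exists 0, 0, (lie_br U1 W1); split; first exact: key.
    by rewrite rmorph0 !scale0r !add0r.
have Vsa : Vs a.
  split => //; exists 1, 0, 0; split => //.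
  by rewrite rmorph1 rmorph0 scale1r scale0r !addr0.
have Vsl : Vs l.
  split => //; exists 0, 1, 0; split => //.
  by rewrite rmorph1 rmorph0 scale1r scale0r add0r addr0.
have LVs : forall x, Lie x -> Vs x.
  by move=> x hx; apply: (hx Vs) => // Y [->|->].
by apply: key; apply: LVs; apply/hgen.
Qed.
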